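(* Let $f:\mathbb{R}^n\to\mathbb{R}$ and $c:\mathbb{R}^n\to\mathbb{R}^m$ ($m<n$) be smooth, with $g=\nabla f$ and Jacobian $J=\nabla c$. Suppose noisy evaluations satisfy, for all $x$, $|\tilde f(x)-f(x)|\le\epsilon_f$, $\|\tilde c(x)-c(x)\|_1\le\epsilon_c$, $\|\tilde g(x)-g(x)\|\le\epsilon_g$, $\|\tilde J(x)-J(x)\|_{1,2}\le\epsilon_J$. Let $\{x_k\}$ be a sequence with $\sigma_{\min}(J_k)\ge\gamma>\epsilon_J$ for all $k$; set $\delta=1/(\gamma-\epsilon_J)$, $\eta=1/\gamma$. Let $0<\beta_k\le b_u$, let $d_k$ solve $\min_d\tfrac12\beta_k\|d\|^2+\tilde g_k^Td$ s.t. $\tilde c_k+\tilde J_kd=0$; fix $\tau\in(0,1)$ and suppose $\pi_k\ge\frac{1}{1-\tau}\|(\tilde J_k\tilde J_k^T)^{-1}\tilde J_k\tilde g_k\|_\infty$ for every $k$. Define $\psi_\pi(x)=\frac{1}{b_u}\|P(x)g(x)\|^2+\pi\tau\|c(x)\|_1$ and $$E(x,\beta,\pi)=\frac{1}{\beta}\big(\|g(x)\|^2\eta\epsilon_J+\epsilon_g\|g(x)\|\big)+\epsilon_g\delta(\|c(x)\|_1+\epsilon_c)+\pi\Big[(2-\tau)\epsilon_c+\epsilon_J\Big(\delta(\|c(x)\|_1+\epsilon_c)+\frac{1}{\beta}\big(\|P(x)g(x)\|+\|g(x)\|\eta\epsilon_J+\epsilon_g\big)\Big)\Big].$$ Choose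 any $\theta_1\in[0,1)$. For any $x_k$ such that $\psi_{\pi_k}(x_k)\ge E(x_k,\beta_k,\pi_k)/(1-\theta_1)$, we have $$\ell(x_k;d_k)\le-\theta_1\Big(\frac{1}{\beta_k}g_k^TP_kg_k+\tau\pi_k\|c_k\|_1\Big)\le-\theta_1\psi_{\pi_k}(x_k),$$ where $\ell(x_k;d_k)=g_k^Td_k+\pi_k\|c_k+J_kd_k\|_1-\pi_k\|c_k\|_1$.
   Context: $\|\cdot\|$ is the Euclidean norm; $\|A\|_{1,2}=\sup_{x\ne0}\|Ax\|_1/\|x\|$; $\sigma_{\min}$ is the smallest singular value. Subscript $k$ denotes evaluation at $x_k$. $P(x)=I-J(x)^T(J(x)J(x)^T)^{-1}J(x)$ and $P_k=P(x_k)$. The constant $b_u$ is an upper bound on $\beta_k$ for all $k$. *)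

(* Defs.v *)
From HB Require Import structures.
From mathcomp Require Import all_boot all_order all_algebra.
From mathcomp Require Import all_classical all_reals all_analysis.
Set Implicit Arguments. Unset Strict Implicit. Unset Printing Implicit Defensive.
Import Order.TTheory GRing.Theory Num.Theory.
Import numFieldNormedType.Exports.
Local Open Scope classical_set_scope.
Local Open Scope ring_scope.

Section Defs.
Variable R : realType.

Definition dotv n (u v : 'cV[R]_n) : R := \sum_(i < n) u i 0 * v i 0.
Definition norm2 n (v : 'cV[R]_n) : R := Num.sqrt (\sum_(i < n) v i 0 ^+ 2).
Definition norm1 n (v : 'cV[R]_n) : R := \sum_(i < n) `|v i 0|.
Definition norminf n (v : 'cV[R]_n) : R := \big[Num.max/0]_(i < n) `|v i 0|.

Definition opnorm12 m n (A : 'M[R]_(m, n)) : R :=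
  sup [set norm1 (A *m x) / norm2 x | x in [set x : 'cV[R]_n | x != 0]].

Definition sigma_min m n (J : 'M[R]_(m, n)) : R :=
  Num.sqrt (inf [set a : R | eigenvalue (J *m J^T) a]).

Definition projP m n (J : 'M[R]_(m, n)) : 'M[R]_n :=
  1%:M - J^T *m invmx (J *m J^T) *m J.

End Defs.

(* Main.v *)
Require Import Defs.
From HB Require Import structures.
From mathcomp Require Import all_boot all_order all_algebra.
From mathcomp Require Import all_classical all_reals all_analysis.
From mathcomp Require Import ring lra.
Import Order.TTheory GRing.Theory Num.Theory.
Import numFieldNormedType.Exports.
Local Open Scope classical_set_scope.
Local Open Scope ring_scope.

Section Vec.
Context {R : realType}.
Implicit Types (a b : R).

Lemma le_sq (a b : R) : 0 <= b -> a ^+ 2 <= b ^+ 2 -> a <= b.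
Proof. move=> hb h; rewrite leNgt; apply/negP => hab; nra. Qed.

Lemma quad_zero (a b : R) : 0 <= b -> (forall t : R, 0 <= a * t + b * t ^+ 2) -> a = 0.
Proof.
move=> hb h.
have hb1 : 0 < b + 1 by rewrite ltr_wpDl.
set s := (b + 1)^-1.
have hs : 0 < s by rewrite invr_gt0.
have hbs : b * s = 1 - s.
  have e : (b + 1) * s = 1 by rewrite /s divff // gt_eqF.
  by rewrite -e mulrDl mul1r addrK.
have := h (- a * s).
have -> : a * (- a * s) + b * (- a * s) ^+ 2 = - (a * s) ^+ 2.
  rewrite !exprMn sqrrN !expr2.
  transitivity (- (a * a) * s + (a * a) * (b * s) * s); first by ring.
  by rewrite hbs; ring.
rewrite oppr_ge0 => h2.
have : (a * s) ^+ 2 = 0 by apply/eqP; rewrite eq_le h2 sqr_ge0.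
by move/eqP; rewrite sqrf_eq0 mulf_eq0 (gt_eqF hs) orbF => /eqP.
Qed.

Context {n : nat}.
Implicit Types (u v w : 'cV[R]_n).

Lemma dotvE u v : dotv u v = (u^T *m v) 0 0.
Proof. by rewrite /dotv mxE; apply: eq_bigr => i _; rewrite mxE. Qed.

Lemma dotvC u v : dotv u v = dotv v u.
Proof. by apply: eq_bigr => i _; rewrite mulrC. Qed.

Lemma dotvDl u v w : dotv (u + v) w = dotv u w + dotv v w.
Proof. by rewrite /dotv -big_split; apply: eq_bigr => i _; rewrite mxE mulrDl. Qed.

Lemma dotvDr u v w : dotv w (u + v) = dotv w u + dotv w v.
Proof. by rewrite dotvC dotvDl !(dotvC w). Qed.

Lemma dotvZl a u v : dotv (a *: u) v = a * dotv u v.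
Proof. by rewrite /dotv mulr_sumr; apply: eq_bigr => i _; rewrite mxE mulrA. Qed.

Lemma dotvZr a u v : dotv u (a *: v) = a * dotv u v.
Proof. by rewrite dotvC dotvZl dotvC. Qed.

Lemma dotvNl u v : dotv (- u) v = - dotv u v.
Proof. by rewrite -scaleN1r dotvZl mulN1r. Qed.

Lemma dotvNr u v : dotv u (- v) = - dotv u v.
Proof. by rewrite dotvC dotvNl dotvC. Qed.

Lemma dotvBl u v w : dotv (u - v) w = dotv u w - dotv v w.
Proof. by rewrite dotvDl dotvNl. Qed.

Lemma dotvBr u v w : dotv w (u - v) = dotv w u - dotv w v.
Proof. by rewrite dotvDr dotvNr. Qed.

Lemma dotv0l v : dotv 0 v = 0.
Proof. by rewrite /dotv big1 // => i _; rewrite mxE mul0r. Qed.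

Lemma dotv0r v : dotv v 0 = 0.
Proof. by rewrite dotvC dotv0l. Qed.

Lemma dotvv_ge0 v : 0 <= dotv v v.
Proof. by apply: sumr_ge0 => i _; rewrite -expr2 sqr_ge0. Qed.

Lemma dotvv_eq0 v : dotv v v = 0 -> v = 0.
Proof.
move=> h; apply/matrixP => i j; rewrite ord1 mxE.
have h' : \sum_(k < n) v k 0 ^+ 2 = 0 by rewrite -[RHS]h /dotv; apply: eq_bigr => k _; rewrite expr2.
have := @psumr_eq0P _ _ xpredT (fun k => v k 0 ^+ 2) (fun k _ => sqr_ge0 (v k 0)) h' i isT.
by move/eqP; rewrite sqrf_eq0 => /eqP.
Qed.

Lemma norm2E v : norm2 v = Num.sqrt (dotv v v).
Proof. by rewrite /norm2; congr Num.sqrt; apply: eq_bigr => i _; rewrite expr2. Qed.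

Lemma norm2_sq v : norm2 v ^+ 2 = dotv v v.
Proof. by rewrite norm2E sqr_sqrtr // dotvv_ge0. Qed.

Lemma norm2_ge0 v : 0 <= norm2 v.
Proof. by rewrite norm2E sqrtr_ge0. Qed.

Lemma norm2_eq0 v : norm2 v = 0 -> v = 0.
Proof. by move=> h; apply: dotvv_eq0; rewrite -norm2_sq h expr0n. Qed.

Lemma CS u v : dotv u v <= norm2 u * norm2 v.
Proof.
have ha := norm2_ge0 u; have hb := norm2_ge0 v.
have [a0|apos] := eqVneq (norm2 u) 0.
  by rewrite a0 mul0r (norm2_eq0 _ a0) dotv0l.
have [b0|bpos] := eqVneq (norm2 v) 0.
  by rewrite b0 mulr0 (norm2_eq0 _ b0) dotv0r.
have := dotvv_ge0 (norm2 v *: u - norm2 u *: v).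
rewrite !dotvBl !dotvBr !dotvZl !dotvZr -!norm2_sq (dotvC v u) => h.
have ha' : 0 < norm2 u by rewrite lt_def apos ha.
have hb' : 0 < norm2 v by rewrite lt_def bpos hb.
have hab := mulr_gt0 ha' hb'.
rewrite -subr_ge0; rewrite -(pmulr_rge0 _ hab).
move: h; set a := norm2 u; set b := norm2 v; set D := dotv u v => h.
nra.
Qed.

Lemma CSabs u v : `|dotv u v| <= norm2 u * norm2 v.
Proof.
rewrite ler_norml CS andbT lerNl -dotvNl.
apply: le_trans (CS _ _) _; rewrite norm2E dotvNl dotvNr opprK -norm2E //.
Qed.

Lemma norm2D u v : norm2 (u + v) <= norm2 u + norm2 v.
Proof.
apply: le_sq; first by rewrite addr_ge0 ?norm2_ge0.
rewrite norm2_sq !dotvDl !dotvDr (dotvC v u) -!norm2_sq.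
have := CS u v; nra.
Qed.

Lemma norm2N v : norm2 (- v) = norm2 v.
Proof. by rewrite !norm2E dotvNl dotvNr opprK. Qed.

Lemma norm2B u v : norm2 (u - v) <= norm2 u + norm2 v.
Proof. by rewrite -(norm2N v) norm2D. Qed.

Lemma norm2Z a v : norm2 (a *: v) = `|a| * norm2 v.
Proof.
by rewrite !norm2E dotvZl dotvZr mulrA -expr2 sqrtrM ?sqr_ge0 // sqrtr_sqr.
Qed.

Lemma coord_le_norm2 v i : `|v i 0| <= norm2 v.
Proof.
rewrite /norm2 -sqrtr_sqr ler_sqrt; last by apply: sumr_ge0 => *; rewrite sqr_ge0.
by rewrite (bigD1 i) //= lerDl sumr_ge0 // => *; rewrite sqr_ge0.
Qed.

Lemma norm1_ge0 v : 0 <= norm1 v.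
Proof. by apply: sumr_ge0 => *. Qed.

Lemma norm1D u v : norm1 (u + v) <= norm1 u + norm1 v.
Proof.
by rewrite /norm1 -big_split; apply: ler_sum => i _; rewrite mxE ler_normD.
Qed.

Lemma norm1N v : norm1 (- v) = norm1 v.
Proof. by apply: eq_bigr => i _; rewrite mxE normrN. Qed.

Lemma norm2_le_norm1 v : norm2 v <= norm1 v.
Proof.
apply: le_sq; first exact: norm1_ge0.
rewrite /norm2 sqr_sqrtr; last by apply: sumr_ge0 => *; rewrite sqr_ge0.
rewrite /norm1 expr2 mulr_suml; apply: ler_sum => i _.
rewrite (bigD1 i) //= mulrDr -expr2 real_normK ?num_real // lerDl.
by apply: mulr_ge0 => //; apply: sumr_ge0.
Qed.

Lemma norminf_ge0 v : 0 <= norminf v.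
Proof.
rewrite /norminf; apply: (big_ind (fun x => 0 <= x)) => //.
by move=> x y hx hy; rewrite le_max hx.
Qed.

Lemma coord_le_norminf v i : `|v i 0| <= norminf v.
Proof. exact: (le_bigmax 0 (fun i => `|v i 0|) i). Qed.

Lemma dot_inf1 u v : `|dotv u v| <= norminf u * norm1 v.
Proof.
rewrite /dotv /norm1 mulr_sumr; apply: le_trans (ler_norm_sum _ _ _) _.
apply: ler_sum => i _; rewrite normrM ler_wpM2r //; exact: coord_le_norminf.
Qed.

End Vec.

Lemma dotv_mul {R : realType} {n m : nat} (A : 'M[R]_(m, n)) (u : 'cV[R]_n) (y : 'cV[R]_m) :
  dotv (A *m u) y = dotv u (A^T *m y).
Proof. by rewrite !dotvE trmx_mul mulmxA. Qed.

Lemma dotv_mulT {R : realType} {n m : nat} (A : 'M[R]_(m, n)) (u : 'cV[R]_n) (y : 'cV[R]_m) :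
  dotv y (A *m u) = dotv (A^T *m y) u.
Proof. by rewrite dotvC dotv_mul dotvC. Qed.



Section Op.
Context {R : realType}.

Lemma opnorm12_bound {m n} (A : 'M[R]_(m, n)) (v : 'cV[R]_n) :
  norm1 (A *m v) <= opnorm12 A * norm2 v.
Proof.
have [->|v0] := eqVneq v 0.
  rewrite mulmx0 norm2E dotv0l sqrtr0 mulr0 /norm1 big1 // => i _; by rewrite mxE normr0.
have hv : 0 < norm2 v.
  by rewrite lt_def norm2_ge0 andbT; apply/eqP => /norm2_eq0 /eqP; rewrite (negbTE v0).
rewrite -ler_pdivrMr //.
apply: sup_upper_bound; last by exists v.
split; first by exists (norm1 (A *m v) / norm2 v); exists v.
exists (\sum_(i < m) \sum_(j < n) `|A i j|).
move=> _ [w /= w0 <-].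
have hw : 0 < norm2 w.
  by rewrite lt_def norm2_ge0 andbT; apply/eqP => /norm2_eq0 /eqP; rewrite (negbTE w0).
rewrite ler_pdivrMr // /norm1 mulr_suml; apply: ler_sum => i _.
rewrite mxE mulr_suml; apply: le_trans (ler_norm_sum _ _ _) _.
apply: ler_sum => j _; rewrite normrM ler_wpM2l //; exact: coord_le_norm2.
Qed.

Lemma opnorm12_ge0 {m n} (A : 'M[R]_(m, n)) : (0 < n)%N -> 0 <= opnorm12 A.
Proof.
move=> n0; set v : 'cV[R]_n := const_mx 1.
have v0 : v != 0.
  apply/eqP => /matrixP /(_ (Ordinal n0) 0); rewrite !mxE => /eqP; by rewrite oner_eq0.
have hv : 0 < norm2 v.
  by rewrite lt_def norm2_ge0 andbT; apply/eqP => /norm2_eq0 /eqP; rewrite (negbTE v0).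
have := (opnorm12_bound A v).
move=> h; have := norm1_ge0 (A *m v).
move=> h0; have : 0 <= opnorm12 A * norm2 v by apply: le_trans h.
by rewrite pmulr_lge0.
Qed.

Lemma op_bound2 {m n} (A : 'M[R]_(m, n)) e (v : 'cV[R]_n) :
  opnorm12 A <= e -> norm2 (A *m v) <= e * norm2 v.
Proof.
move=> he; apply: le_trans (norm2_le_norm1 _) _.
apply: le_trans ((opnorm12_bound A v)) _; apply: ler_wpM2r => //; exact: norm2_ge0.
Qed.

Lemma op_bound2T {m n} (A : 'M[R]_(m, n)) e (y : 'cV[R]_m) :
  0 <= e -> (forall v, norm2 (A *m v) <= e * norm2 v) -> norm2 (A^T *m y) <= e * norm2 y.
Proof.
move=> e0 hA; set w := A^T *m y.
have h : norm2 w ^+ 2 <= e * norm2 y * norm2 w.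
  rewrite norm2_sq {1}/w dotv_mul trmxK.
  apply: le_trans (CS _ _) _; rewrite [e * _]mulrC -mulrA.
  by apply: ler_wpM2l; [exact: norm2_ge0 | apply: hA].
have := norm2_ge0 w; have := norm2_ge0 y.
move: h; set a := norm2 w; set b := norm2 y => h ha hb.
rewrite leNgt; apply/negP => hlt.
have : e * b * a < a ^+ 2 by rewrite expr2 ltr_pM2r // (le_lt_trans _ hlt) // mulr_ge0.
by rewrite ltNge h.
Qed.

End Op.


Section Proj.
Context {R : realType}.

Lemma unit_of_ker {m} (M : 'M[R]_m) :
  (forall y : 'cV[R]_m, M *m y = 0 -> y = 0) -> M \in unitmx.
Proof.
move=> hM; rewrite -unitmx_tr -row_free_unit -kermx_eq0.
apply/eqP/row_matrixP => i; rewrite row0.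
have h : (row i (kermx M^T) <= kermx M^T)%MS by apply: row_sub.
rewrite sub_kermx in h.
have : M *m (row i (kermx M^T))^T = 0.
  by rewrite -[M in M *m _]trmxK -trmx_mul (eqP h) trmx0.
by move/hM => /(congr1 trmx); rewrite trmxK trmx0.
Qed.

Context {m n : nat} (K : 'M[R]_(m, n)).
Hypothesis hK : K *m K^T \in unitmx.
Let W := invmx (K *m K^T).

Lemma WT : W^T = W.
Proof. by rewrite /W trmx_inv trmx_mul trmxK. Qed.

Lemma projPE : projP K = 1%:M - K^T *m W *m K.
Proof. by []. Qed.

Lemma projPT : (projP K)^T = projP K.
Proof.
by rewrite projPE linearB /= trmx1 !trmx_mul trmxK WT mulmxA.
Qed.

Lemma KP : K *m projP K = 0.
Proof.
rewrite projPE mulmxBr mulmx1 !mulmxA mulmxV // mul1mx; exact: subrr.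
Qed.

Lemma PKT : projP K *m K^T = 0.
Proof. by rewrite -projPT -trmx_mul KP trmx0. Qed.

Lemma PP : projP K *m projP K = projP K.
Proof.
by rewrite {2}projPE mulmxBr mulmx1 !mulmxA PKT !mul0mx subr0.
Qed.

Lemma Pdecomp (g : 'cV[R]_n) : g = projP K *m g + K^T *m (W *m (K *m g)).
Proof. by rewrite projPE mulmxBl mul1mx !mulmxA subrK. Qed.

Lemma P_orth (g : 'cV[R]_n) (z : 'cV[R]_m) : dotv (projP K *m g) (K^T *m z) = 0.
Proof. by rewrite dotv_mul projPT mulmxA PKT mul0mx dotv0r. Qed.

Lemma dot_gPg (g : 'cV[R]_n) : dotv g (projP K *m g) = norm2 (projP K *m g) ^+ 2.
Proof.
by rewrite norm2_sq -{1}PP -mulmxA dotv_mulT projPT.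
Qed.

Lemma norm_split (g : 'cV[R]_n) :
  norm2 g ^+ 2 = norm2 (projP K *m g) ^+ 2 + norm2 (K^T *m (W *m (K *m g))) ^+ 2.
Proof.
rewrite !norm2_sq {1 2}(Pdecomp g) dotvDl !dotvDr P_orth (dotvC _ (projP K *m g)) P_orth.
by rewrite addr0 add0r.
Qed.

Lemma normP_le (g : 'cV[R]_n) : norm2 (projP K *m g) <= norm2 g.
Proof.
apply: le_sq; first exact: norm2_ge0.
by rewrite [X in _ <= X]norm_split lerDl sqr_ge0.
Qed.

End Proj.


Section Spec.
Context {R : realType}.

Lemma cont_sum {T : topologicalType} {k : nat} (F : 'I_k -> T -> R) :
  (forall i, continuous (F i)) -> continuous (fun x => \sum_(i < k) F i x).
Proof.
move=> hF x; apply: cvg_big => // [|i _]; last exact: hF.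
exact: add_continuous.
Qed.

Context {m : nat} (M : 'M[R]_m).

Let S (v : 'rV[R]_m) := \sum_(i < m) v 0 i ^+ 2.
Let Q (v : 'rV[R]_m) := \sum_(i < m) v 0 i * \sum_(j < m) M i j * v 0 j.

Lemma S_cont : continuous S.
Proof.
apply: cont_sum => i v; rewrite /=.
apply: (@continuousM _ _ (fun v : 'rV[R]_m => v 0 i) (fun v : 'rV[R]_m => v 0 i));
  exact: coord_continuous.
Qed.

Lemma Q_cont : continuous Q.
Proof.
apply: cont_sum => i v.
apply: (@continuousM _ _ (fun v : 'rV[R]_m => v 0 i)); first exact: coord_continuous.
apply: cont_sum => j w.
apply: (@continuousM _ _ (fun=> M i j) (fun v : 'rV[R]_m => v 0 j)).
  exact: cst_continuous.
exact: coord_continuous.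
Qed.


Lemma SZ a v : S (a *: v) = a ^+ 2 * S v.
Proof. by rewrite /S mulr_sumr; apply: eq_bigr => i _; rewrite mxE exprMn. Qed.

Lemma QZ a v : Q (a *: v) = a ^+ 2 * Q v.
Proof.
rewrite /Q mulr_sumr; apply: eq_bigr => i _; rewrite mxE.
have -> : \sum_(j < m) M i j * (a *: v) 0 j = a * \sum_(j < m) M i j * v 0 j.
  by rewrite mulr_sumr; apply: eq_bigr => j _; rewrite mxE; ring.
by rewrite expr2; ring.
Qed.

Lemma S0 v : S v = 0 -> Q v = 0.
Proof.
move=> h; have hv : forall i, v 0 i = 0.
  move=> i; have := @psumr_eq0P _ _ xpredT (fun k => v 0 k ^+ 2) (fun k _ => sqr_ge0 _) h i isT.
  by move/eqP; rewrite sqrf_eq0 => /eqP.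
by rewrite /Q big1 // => i _; rewrite hv mul0r.
Qed.

Lemma S_ge0 v : 0 <= S v.
Proof. by apply: sumr_ge0 => i _; rewrite sqr_ge0. Qed.

Lemma rayleigh_min : (0 < m)%N ->
  exists2 c : 'rV[R]_m, S c = 1 & forall v, Q c * S v <= Q v.
Proof.
move=> m0.
set Sph := [set v : 'rV[R]_m | S v = 1].
have Sph0 : Sph !=set0.
  exists (delta_mx 0 (Ordinal m0)); rewrite /Sph /= /S (bigD1 (Ordinal m0)) //= big1.
    by rewrite !mxE !eqxx expr1n addr0.
  by move=> i /negbTE hi; rewrite mxE hi andbF expr0n.
have Sphc : compact Sph.
  apply: bounded_closed_compact.
    exists 1; split => // r hr v; rewrite /Sph /= => hv.
    rewrite [X in X <= _]/Num.norm /= mx_normrE; apply: bigmax_le => [|ij _]; first exact: ltW (lt_trans ltr01 hr).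
    apply: le_trans (ltW hr); rewrite ord1.
    apply: le_sq => //; rewrite expr1n real_normK ?num_real // -hv /S (bigD1 ij.2) //= lerDl.
    by apply: sumr_ge0 => *; rewrite sqr_ge0.
  have -> : Sph = S @^-1` [set 1] by [].
  apply: preimage_closed; last exact: closed_eq.
  by move=> x _; apply: S_cont.
have [c /set_mem hc hmin] := compact_EVT_min Sph0 Sphc (continuous_subspaceT Q_cont).
exists c => // v.
have [Sv0|Svn0] := eqVneq (S v) 0.
  by rewrite Sv0 mulr0 S0.
have Svp : 0 < S v by rewrite lt_def Svn0 S_ge0.
set a := (Num.sqrt (S v))^-1.
have ha2 : a ^+ 2 = (S v)^-1 by rewrite /a exprVn sqr_sqrtr // ltW.
have : Q c <= Q (a *: v).
  apply: hmin; apply/mem_set; rewrite /Sph /= SZ ha2 mulVf //.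
rewrite QZ ha2 => h.
by rewrite -ler_pdivlMr // mulrC.
Qed.


Lemma S_dot (w : 'cV[R]_m) : S w^T = dotv w w.
Proof. by apply: eq_bigr => i _; rewrite mxE expr2. Qed.

Lemma Q_dot (w : 'cV[R]_m) : Q w^T = dotv w (M *m w).
Proof. by apply: eq_bigr => i _; rewrite !mxE; congr (_ * _); apply: eq_bigr => j _; rewrite mxE. Qed.

Lemma spec_min : (0 < m)%N -> M^T = M ->
  exists lam (y : 'cV[R]_m), [/\ y != 0, M *m y = lam *: y &
     forall v, lam * dotv v v <= dotv v (M *m v)].
Proof.
move=> m0 hsym.
have [c hc hmin] := rayleigh_min m0.
set lam := Q c.
have hq : forall v : 'cV[R]_m, lam * dotv v v <= dotv v (M *m v).
  by move=> v; rewrite -S_dot -Q_dot; apply: hmin.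
set y := c^T.
have hyy : dotv y y = 1 by rewrite -S_dot trmxK.
have hyMy : dotv y (M *m y) = lam by rewrite -Q_dot trmxK.
exists lam, y; split => //.
- by apply/eqP => y0; move: hyy; rewrite y0 dotv0l => /eqP; rewrite eq_sym oner_eq0.
- have [z hz] : exists z, z = M *m y - lam *: y by eexists.
  apply/eqP; rewrite -subr_eq0 -hz; apply/eqP.
  set qf := fun v : 'cV[R]_m => dotv v (M *m v) - lam * dotv v v.
  have qf_ge0 v : 0 <= qf v by rewrite subr_ge0.
  have hsymd : dotv y (M *m z) = dotv z (M *m y).
    by rewrite dotv_mulT hsym dotvC.
  have hzz : dotv z z = dotv z (M *m y) - lam * dotv z y.
    by rewrite {2}hz dotvBr dotvZr.
  have hexp t : qf (y + t *: z) = (2 * dotv z z) * t + qf z * t ^+ 2.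
    rewrite /qf mulmxDr -scalemxAr !dotvDl !dotvDr !dotvZl !dotvZr hyMy hyy hsymd.
    rewrite (dotvC y z) /qf hzz; ring.
  have h0 : 2 * dotv z z = 0.
    apply: (quad_zero _ _ (qf_ge0 z)) => t; rewrite -hexp; exact: qf_ge0.
  have : dotv z z = 0 by move/eqP: h0; rewrite mulf_eq0 pnatr_eq0 /= => /eqP.
  by move/dotvv_eq0 => ->.
Qed.

End Spec.


Section Sig.
Context {R : realType}.

Lemma dot_JJT {m n} (J : 'M[R]_(m, n)) (w : 'cV[R]_m) :
  dotv w (J *m J^T *m w) = norm2 (J^T *m w) ^+ 2.
Proof. by rewrite -mulmxA dotv_mulT norm2_sq. Qed.

Lemma sigma_bound {m n} (J : 'M[R]_(m, n)) (gamma : R) :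
  (0 < m)%N -> 0 < gamma -> gamma <= sigma_min J ->
  forall y : 'cV[R]_m, gamma * norm2 y <= norm2 (J^T *m y).
Proof.
move=> m0 g0 hg.
set M := J *m J^T.
have hsym : M^T = M by rewrite /M trmx_mul trmxK.
have [lam [y0 [y00 hMy hq]]] := spec_min M m0 hsym.
set Sset := [set a : R | eigenvalue M a].
have Slb : forall a, Sset a -> 0 <= a.
  move=> a /eigenvalueP [v hv v0].
  set w := v^T.
  have hMw : M *m w = a *: w.
    by rewrite -hsym -trmx_mul hv /w linearZ.
  have w0 : 0 < dotv w w.
    rewrite lt_def dotvv_ge0 andbT; apply/eqP => /dotvv_eq0 /(congr1 trmx).
    by rewrite trmxK trmx0 => /eqP; rewrite (negbTE v0).
  have := dot_JJT J w; rewrite -/M hMw dotvZr => h.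
  by rewrite -(pmulr_lge0 _ w0) h sqr_ge0.
have lamS : Sset lam.
  apply/eigenvalueP; exists y0^T.
    by rewrite -hsym -trmx_mul hMy linearZ.
  by apply/eqP => /(congr1 trmx); rewrite trmxK trmx0 => /eqP; rewrite (negbTE y00).
have hinf : inf Sset <= lam.
  by apply: ge_inf => //; exists 0 => a /Slb.
have lam0 := Slb _ lamS.
have hg2 : gamma ^+ 2 <= lam.
  have : gamma <= Num.sqrt lam.
    apply: (le_trans hg); rewrite /sigma_min ler_sqrt //.
  move=> h; rewrite -(sqr_sqrtr lam0) ler_sqr // ?nnegrE ?sqrtr_ge0 // ltW //.
move=> y.
apply: le_sq; first exact: norm2_ge0.
rewrite -dot_JJT -/M exprMn norm2_sq.
apply: le_trans (hq y); apply: ler_wpM2r => //; exact: dotvv_ge0.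
Qed.

Lemma JJT_unit {m n} (J : 'M[R]_(m, n)) (gamma : R) :
  0 < gamma -> (forall y : 'cV[R]_m, gamma * norm2 y <= norm2 (J^T *m y)) ->
  J *m J^T \in unitmx.
Proof.
move=> g0 hJ; apply: unit_of_ker => y hy.
have h := hJ y.
have : norm2 (J^T *m y) = 0.
  apply/eqP; rewrite -sqrf_eq0 -dot_JJT hy dotv0r //.
move=> h0; rewrite h0 in h.
have : norm2 y <= 0 by rewrite -(pmulr_rle0 _ g0).
move=> h1; apply: norm2_eq0; apply/eqP; by rewrite eq_le h1 norm2_ge0.
Qed.

End Sig.


Lemma amgm_aux {R : realType} (p q r nx : R) : 0 <= p -> 0 <= q -> 0 <= r -> 0 <= nx ->
  nx ^+ 2 = r ^+ 2 + p ^+ 2 ->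
  p ^+ 2 * r + 2 * p ^+ 2 * q - q ^+ 2 * r <= (p ^+ 2 + q ^+ 2) * nx.
Proof.
move=> hp hq hr hn hnx.
have hrn : r <= nx by apply: le_sq => //; rewrite hnx lerDl sqr_ge0.
set A := p ^+ 2 * (nx - r); set B := q ^+ 2 * (nx + r).
have hA : 0 <= A by rewrite /A mulr_ge0 ?sqr_ge0 // subr_ge0.
have hB : 0 <= B by rewrite /B mulr_ge0 ?sqr_ge0 // addr_ge0.
have hAB : A * B = (p ^+ 2 * q) ^+ 2.
  rewrite /A /B; transitivity (p ^+ 2 * q ^+ 2 * (nx ^+ 2 - r ^+ 2)); first by ring.
  rewrite hnx; ring.
have h2 : 2 * (p ^+ 2 * q) <= A + B.
  apply: le_sq; first exact: addr_ge0.
  have : 0 <= (A - B) ^+ 2 by apply: sqr_ge0.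
  rewrite exprMn -hAB; nra.
suff : 0 <= A + B - 2 * (p ^+ 2 * q) by rewrite /A /B => h; nra.
by rewrite subr_ge0.
Qed.

Lemma key_ineq {R : realType} (p q r b nx s : R) :
  0 <= p -> 0 <= q -> 0 <= r -> 0 <= b -> 0 <= nx -> 0 <= s -> s < 1 ->
  nx ^+ 2 = r ^+ 2 + p ^+ 2 -> p ^+ 2 - q * r <= b * nx -> r <= s * nx ->
  p ^+ 2 - b ^+ 2 <= s * (p ^+ 2 + q ^+ 2).
Proof.
move=> hp hq hr hb hn hs0 hs1 hnx hm hrs.
have hT := @amgm_aux _ p q r nx hp hq hr hn hnx.
have [hm0|hm0] := leP 0 (p ^+ 2 - q * r).
- have [n0|npos] := eqVneq nx 0.
    have r0 : r = 0 by apply/eqP; rewrite eq_le hr andbT -(mulr0 s) -n0.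
    have p0 : p ^+ 2 = 0 by move: hnx; rewrite n0 r0 expr0n /= add0r.
    by rewrite p0 sub0r lerNl (le_trans _ (sqr_ge0 b)) // oppr_le0 mulr_ge0 ?addr_ge0 ?sqr_ge0.
  have hnp : 0 < nx by rewrite lt_def npos hn.
  have hb2 : (p ^+ 2 - q * r) ^+ 2 <= (b * nx) ^+ 2 by rewrite ler_sqr ?nnegrE // mulr_ge0.
  set T := p ^+ 2 * r + 2 * p ^+ 2 * q - q ^+ 2 * r.
  have hrT : r * T <= s * (p ^+ 2 + q ^+ 2) * nx ^+ 2.
    have [T0|T0] := leP T 0.
      have h1 : r * T <= 0 by rewrite mulr_ge0_le0.
      apply: le_trans h1 _; apply: mulr_ge0; last exact: sqr_ge0.
      by apply: mulr_ge0 => //; apply: addr_ge0; apply: sqr_ge0.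
    apply: le_trans (ler_wpM2r (ltW T0) hrs) _.
    have := ler_wpM2l (mulr_ge0 hs0 hn) hT.
    by have -> : s * (p ^+ 2 + q ^+ 2) * nx ^+ 2 = s * nx * ((p ^+ 2 + q ^+ 2) * nx) by ring.
  have hid : p ^+ 2 * nx ^+ 2 - (p ^+ 2 - q * r) ^+ 2 = r * T.
    by rewrite hnx /T; ring.
  have : (p ^+ 2 - b ^+ 2) * nx ^+ 2 <= s * (p ^+ 2 + q ^+ 2) * nx ^+ 2.
    apply: le_trans hrT; rewrite -hid exprMn in hb2 *; nra.
  by rewrite ler_pM2r ?exprn_gt0.
- have hp4 : p ^+ 2 * p ^+ 2 <= (q * r) ^+ 2.
    rewrite expr2; apply: ler_pM => //; rewrite ?sqr_ge0 //; nra.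
  have hr2 : r ^+ 2 <= s ^+ 2 * (r ^+ 2 + p ^+ 2).
    by rewrite -hnx -exprMn ler_sqr ?nnegrE // mulr_ge0.
  suff : p ^+ 2 <= s * (p ^+ 2 + q ^+ 2) by move=> h; apply: le_trans h; rewrite gerBl sqr_ge0.
  have [p0|pn0] := eqVneq (p ^+ 2) 0.
    by rewrite p0 mulr_ge0 // add0r sqr_ge0.
  have pp : 0 < p ^+ 2 by rewrite lt_def pn0 sqr_ge0.
  have h1 : p ^+ 2 * (1 - s ^+ 2) <= q ^+ 2 * s ^+ 2.
    rewrite -(ler_pM2r pp).
    have : p ^+ 2 * p ^+ 2 * (1 - s ^+ 2) <= (q * r) ^+ 2 * (1 - s ^+ 2).
      by apply: ler_wpM2r => //; rewrite subr_ge0 expr_le1 // ltW.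
    move=> h.
    have h2 : r ^+ 2 * (1 - s ^+ 2) <= s ^+ 2 * p ^+ 2 by nra.
    have h3 := ler_wpM2l (sqr_ge0 q) h2.
    rewrite exprMn in h.
    have e1 : p ^+ 2 * (1 - s ^+ 2) * p ^+ 2 = p ^+ 2 * p ^+ 2 * (1 - s ^+ 2) by ring.
    have e2 : q ^+ 2 * s ^+ 2 * p ^+ 2 = q ^+ 2 * (s ^+ 2 * p ^+ 2) by ring.
    have e3 : q ^+ 2 * r ^+ 2 * (1 - s ^+ 2) = q ^+ 2 * (r ^+ 2 * (1 - s ^+ 2)) by ring.
    by rewrite e1 e2; apply: le_trans h _; rewrite e3.
  nra.
Qed.


Section Pert.
Context {R : realType} {m n : nat} (J Jt : 'M[R]_(m, n)) (gamma e : R).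
Hypothesis g0 : 0 < gamma.
Hypothesis e0 : 0 <= e.
Hypothesis eg : e < gamma.
Hypothesis hJ : forall y : 'cV[R]_m, gamma * norm2 y <= norm2 (J^T *m y).
Hypothesis hE : forall v : 'cV[R]_n, norm2 ((Jt - J) *m v) <= e * norm2 v.
Hypothesis hET : forall y : 'cV[R]_m, norm2 ((Jt - J)^T *m y) <= e * norm2 y.

Lemma hJt y : (gamma - e) * norm2 y <= norm2 (Jt^T *m y).
Proof.
have : J^T *m y = Jt^T *m y - (Jt - J)^T *m y.
  by rewrite linearB /= mulmxBl opprB addrC subrK.
move=> h; have := hJ y; rewrite h => h1.
have := le_trans h1 (norm2B _ _); have := hET y; rewrite mulrBl; lra.
Qed.

Lemma JJT_u : J *m J^T \in unitmx.
Proof. exact: (JJT_unit _ _ g0 hJ). Qed.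

Lemma JtJtT_u : Jt *m Jt^T \in unitmx.
Proof. by apply: (JJT_unit _ _ _ hJt); rewrite subr_gt0. Qed.

Lemma JtJT_u : Jt *m J^T \in unitmx.
Proof.
apply: unit_of_ker => y hy.
have hd : dotv (J^T *m y) (Jt^T *m y) = 0.
  by rewrite dotv_mulT trmxK mulmxA hy dotv0l.
have h2 : norm2 (J^T *m y) ^+ 2 <= norm2 (J^T *m y) * (e * norm2 y).
  rewrite norm2_sq.
  have -> : dotv (J^T *m y) (J^T *m y) = - dotv (J^T *m y) ((Jt - J)^T *m y).
    by rewrite linearB /= mulmxBl dotvBr hd sub0r opprK.
  apply: le_trans (ler_norm _) _; rewrite normrN; apply: le_trans (CSabs _ _) _.
  by apply: ler_wpM2l; [exact: norm2_ge0 | exact: hET].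
have h1 := hJ y.
have hy0 := norm2_ge0 y; have hj0 := norm2_ge0 (J^T *m y).
have : norm2 y <= 0.
  move: h1 h2; set a := norm2 (J^T *m y); set b := norm2 y => h1 h2.
  rewrite leNgt; apply/negP => hb.
  have ha : a <= e * b.
    case: (eqVneq a 0) => [->|an0]; first by rewrite mulr_ge0 // ltW.
    have ap : 0 < a by rewrite lt_def an0 hj0.
    by rewrite -(ler_pM2l ap) -expr2.
  have : gamma * b <= e * b by apply: le_trans h1 ha.
  by rewrite ler_pM2r // leNgt eg.
by move=> h; apply: norm2_eq0; apply/eqP; rewrite eq_le h norm2_ge0.
Qed.

Local Notation P := (projP J).
Local Notation Pt := (projP Jt).
Local Notation W := (invmx (J *m J^T)).
Local Notation Wt := (invmx (Jt *m Jt^T)).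

Lemma PtJT (y : 'cV[R]_m) : Pt *m (J^T *m y) = - (Pt *m ((Jt - J)^T *m y)).
Proof.
rewrite linearB /= [(_ - _) *m y]mulmxBl [Pt *m (_ - _)]mulmxBr [Pt *m (Jt^T *m y)]mulmxA (PKT _ JtJtT_u) mul0mx sub0r opprK //.
Qed.

Lemma close1 (g : 'cV[R]_n) : norm2 (Pt *m g) <= norm2 (P *m g) + e / gamma * norm2 g.
Proof.
set y := W *m (J *m g).
have hg : g = P *m g + J^T *m y by rewrite /y /W /P; exact: (Pdecomp J g).
have hy : norm2 (J^T *m y) <= norm2 g.
  apply: le_sq; first exact: norm2_ge0.
  by rewrite [X in _ <= X](norm_split _ JJT_u g) lerDr sqr_ge0.
have hyb : norm2 y <= norm2 g / gamma.
  by rewrite ler_pdivlMr // mulrC; apply: le_trans (hJ y) hy.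
rewrite {1}hg mulmxDr mulmxA; apply: le_trans (norm2D _ _) _.
apply: lerD; first by rewrite -mulmxA; exact: normP_le _ JtJtT_u _.
rewrite PtJT norm2N; apply: le_trans (normP_le _ JtJtT_u _) _.
apply: le_trans (hET y) _.
rewrite mulrAC -mulrA; apply: ler_wpM2l => //.
Qed.

Lemma close2 (g : 'cV[R]_n) :
  norm2 (P *m g) ^+ 2 <= norm2 (Pt *m g) ^+ 2 + e / gamma * norm2 g ^+ 2.
Proof.
set N := Jt *m J^T.
set y := invmx N *m (Jt *m g).
set x := J^T *m y.
set a := Jt^T *m (Wt *m (Jt *m g)).
have hJtx : Jt *m x = Jt *m g by rewrite /x /y mulmxA -/N mulmxA mulmxV ?JtJT_u // mul1mx.
have hx : x = Pt *m x + a by rewrite {1}(Pdecomp Jt x) hJtx.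
have hgd : g = Pt *m g + a by exact: (Pdecomp Jt g).
set p := norm2 a; set q := norm2 (Pt *m g); set r := norm2 (Pt *m x); set nx := norm2 x.
set b := norm2 (J^T *m (W *m (J *m g))).
have F1 : nx ^+ 2 = r ^+ 2 + p ^+ 2.
  by rewrite /nx /r /p (norm_split _ JtJtT_u x) hJtx.
have F2 : norm2 g ^+ 2 = q ^+ 2 + p ^+ 2 by exact: (norm_split _ JtJtT_u g).
have F2' : norm2 g ^+ 2 = norm2 (P *m g) ^+ 2 + b ^+ 2 by exact: (norm_split _ JJT_u g).
have F3 : dotv g x = p ^+ 2 + dotv (Pt *m g) (Pt *m x).
  rewrite {1}hgd {1}hx !dotvDl !dotvDr /a !(P_orth _ JtJtT_u) (dotvC (Jt^T *m _) (Pt *m x)) (P_orth _ JtJtT_u).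
  by rewrite /p norm2_sq; ring.
have F4 : dotv g x <= b * nx.
  rewrite {1}(Pdecomp J g) dotvDl /x (P_orth _ JJT_u) add0r.
  exact: CS.
have F5 : r <= e / gamma * nx.
  rewrite /r /x PtJT norm2N; apply: le_trans (normP_le _ JtJtT_u _) _.
  apply: le_trans (hET y) _.
  have : norm2 y <= nx / gamma by rewrite ler_pdivlMr // mulrC; exact: hJ.
  move=> h; rewrite mulrAC -mulrA; apply: ler_wpM2l => //.
have Fm : p ^+ 2 - q * r <= b * nx.
  apply: le_trans F4; rewrite F3 lerD2l.
  rewrite lerNl -dotvNl; apply: le_trans (CS _ _) _; by rewrite norm2N.
have hs1 : e / gamma < 1 by rewrite ltr_pdivrMr // mul1r.
have hs0 : 0 <= e / gamma by rewrite divr_ge0 // ltW.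
have := @key_ineq _ p q r b nx (e / gamma) (norm2_ge0 _) (norm2_ge0 _) (norm2_ge0 _) (norm2_ge0 _) (norm2_ge0 _) hs0 hs1 F1 Fm F5.
rewrite -/p -/q -/b => hk.
have -> : norm2 (P *m g) ^+ 2 = norm2 g ^+ 2 - b ^+ 2 by rewrite F2'; ring.
rewrite F2; lra.
Qed.

End Pert.


Section Main.
Context {R : realType} {m n : nat} (J Jt : 'M[R]_(m, n)) (g gt d : 'cV[R]_n)
  (c ct : 'cV[R]_m) (gamma eJ eg ec b : R).
Hypothesis g0 : 0 < gamma.
Hypothesis e0 : 0 <= eJ.
Hypothesis eJg : eJ < gamma.
Hypothesis hJ : forall y : 'cV[R]_m, gamma * norm2 y <= norm2 (J^T *m y).
Hypothesis hET : forall y : 'cV[R]_m, norm2 ((Jt - J)^T *m y) <= eJ * norm2 y.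
Hypothesis hb : 0 < b.
Hypothesis hfeas : ct + Jt *m d = 0.
Hypothesis hopt : forall dd : 'cV[R]_n, ct + Jt *m dd = 0 ->
  2^-1 * b * norm2 d ^+ 2 + dotv gt d <= 2^-1 * b * norm2 dd ^+ 2 + dotv gt dd.

Local Notation Pt := (projP Jt).
Local Notation Wt := (invmx (Jt *m Jt^T)).

Lemma hu : Jt *m Jt^T \in unitmx.
Proof. exact: (JtJtT_u _ _ _ _ eJg hJ hET). Qed.

Lemma opt_orth (w : 'cV[R]_n) : Jt *m w = 0 -> dotv (b *: d + gt) w = 0.
Proof.
move=> hw.
apply: (quad_zero _ (2^-1 * b * dotv w w)).
  by rewrite mulr_ge0 ?dotvv_ge0 // mulr_ge0 ?invr_ge0 // ltW.
move=> t.
have := hopt (d + t *: w).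
rewrite mulmxDr -scalemxAr hw scaler0 addr0 => /(_ hfeas) h.
rewrite !norm2_sq !dotvDl !dotvDr !dotvZl !dotvZr (dotvC w d) in h.
rewrite -subr_ge0 in h.
have -> : dotv (b *: d + gt) w * t + 2^-1 * b * dotv w w * t ^+ 2 =
  2^-1 * b * (dotv d d + t * dotv d w + (t * dotv d w + t * (t * dotv w w))) +
  (dotv gt d + t * dotv gt w) - (2^-1 * b * dotv d d + dotv gt d).
  by rewrite dotvDl dotvZl; field.
exact: h.
Qed.


Lemma d_formula : d = - (b^-1 *: (Pt *m gt)) - Jt^T *m (Wt *m ct).
Proof.
set u := b *: d + gt.
have hPu : Pt *m u = 0.
  have hw : Jt *m (Pt *m u) = 0 by rewrite mulmxA (KP _ hu) mul0mx.
  have h := opt_orth _ hw.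
  rewrite (dot_gPg _ hu) in h.
  by apply: norm2_eq0; apply/eqP; rewrite -sqrf_eq0; apply/eqP.
have hu2 : u = Jt^T *m (Wt *m (Jt *m u)) by rewrite {1}(Pdecomp Jt u) hPu add0r.
have hJd : Jt *m d = - ct by apply/eqP; rewrite -addr_eq0 addrC hfeas.
have hJu : Jt *m u = Jt *m gt - b *: ct by rewrite /u mulmxDr -scalemxAr hJd scalerN addrC.
have e2 : b *: d = Jt^T *m (Wt *m (Jt *m gt - b *: ct)) - gt.
  by rewrite -hJu -hu2 /u addrK.
have hb0 : b != 0 by rewrite gt_eqF.
apply: (scalerI hb0).
rewrite scalerBr scalerN scalerA mulfV // scale1r e2.
rewrite !mulmxBr -!scalemxAr.
set X := Jt^T *m (Wt *m (Jt *m gt)).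
set Y := Jt^T *m (Wt *m ct).
have -> : projP Jt *m gt = gt - X by rewrite {2}(Pdecomp Jt gt) addrK.
by rewrite opprB addrAC.
Qed.


Lemma main_step (tau p : R) :
  (forall v : 'cV[R]_n, norm1 ((Jt - J) *m v) <= eJ * norm2 v) ->
  norm1 (ct - c) <= ec -> norm2 (gt - g) <= eg -> 0 < tau < 1 ->
  (1 - tau)^-1 * norminf (invmx (Jt *m Jt^T) *m Jt *m gt) <= p ->
  dotv g d + p * norm1 (c + J *m d) - p * norm1 c <=
  - (b^-1 * norm2 (projP J *m g) ^+ 2 + tau * p * norm1 c)
  + (b^-1 * (norm2 g ^+ 2 * gamma^-1 * eJ + eg * norm2 g)
    + eg * (gamma - eJ)^-1 * (norm1 c + ec)
    + p * ((2 - tau) * ec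
           + eJ * ((gamma - eJ)^-1 * (norm1 c + ec)
                   + b^-1 * (norm2 (projP J *m g)
                             + norm2 g * gamma^-1 * eJ + eg)))).
Proof.
move=> hEv1 hc hg /andP [t0 t1] hpi.
set vN := Jt^T *m (Wt *m ct).
set u0 := Pt *m gt.
set C := norm1 c; set G := norm2 g; set PG := norm2 (projP J *m g).
set ib := b^-1; set dl := (gamma - eJ)^-1.
have ib0 : 0 <= ib by rewrite invr_ge0 ltW.
have gme : 0 < gamma - eJ by rewrite subr_gt0.
have dl0 : 0 <= dl by rewrite invr_ge0 ltW.
have ec0 : 0 <= ec by apply: le_trans hc; exact: norm1_ge0.
have eg0 : 0 <= eg by apply: le_trans hg; exact: norm2_ge0.
have G0 : 0 <= G by exact: norm2_ge0.
have C0 : 0 <= C by exact: norm1_ge0.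
have PG0 : 0 <= PG by exact: norm2_ge0.
have hlam : norminf (invmx (Jt *m Jt^T) *m Jt *m gt) <= (1 - tau) * p.
  by rewrite -ler_pdivrMl ?subr_gt0 // mulrC.
have p0 : 0 <= p.
  apply: le_trans hpi; apply: mulr_ge0; [by rewrite invr_ge0 subr_ge0 ltW | exact: norminf_ge0].
have hct : norm1 ct <= C + ec.
  have -> : ct = c + (ct - c) by rewrite addrC subrK.
  by apply: le_trans (norm1D _ _) _; rewrite lerD2l.
have hvN : norm2 vN <= dl * (C + ec).
  set z := Wt *m ct.
  have hJz : Jt *m Jt^T *m z = ct by rewrite /z mulmxA mulmxV ?hu // mul1mx.
  have h1 : norm2 vN ^+ 2 <= norm2 z * norm2 ct.
    by rewrite norm2_sq {1}/vN dotv_mul trmxK mulmxA hJz; exact: CS.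
  have h2 : (gamma - eJ) * norm2 z <= norm2 vN by exact: (hJt _ _ _ _ hJ hET).
  have h3 : norm2 ct <= C + ec by apply: le_trans (norm2_le_norm1 _) hct.
  have hv0 := norm2_ge0 vN; have hz0 := norm2_ge0 z; have hc0 := norm2_ge0 ct.
  have h4 : norm2 vN <= dl * norm2 ct.
    rewrite /dl mulrC ler_pdivlMr //.
    have [v0|vpos] := eqVneq (norm2 vN) 0; first by rewrite v0 mul0r.
    have vp : 0 < norm2 vN by rewrite lt_def vpos hv0.
    rewrite -(ler_pM2l vp).
    apply: le_trans (_ : norm2 vN ^+ 2 * (gamma - eJ) <= _).
      by rewrite expr2 mulrA.
    apply: le_trans (ler_wpM2r (ltW gme) h1) _.
    have -> : norm2 z * norm2 ct * (gamma - eJ) = ((gamma - eJ) * norm2 z) * norm2 ct by ring.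
    by apply: ler_wpM2r => //.
  by apply: le_trans h4 _; apply: ler_wpM2l.
have hPtg : norm2 (Pt *m g) <= PG + eJ / gamma * G.
  exact: (close1 _ _ _ _ g0 e0 eJg hJ hET g).
have hPg2 : PG ^+ 2 <= norm2 (Pt *m g) ^+ 2 + eJ / gamma * G ^+ 2.
  exact: (close2 _ _ _ _ g0 e0 eJg hJ hET g).
have hu0 : norm2 u0 <= norm2 (Pt *m g) + eg.
  have -> : u0 = Pt *m g + Pt *m (gt - g) by rewrite -mulmxDr addrC subrK.
  apply: le_trans (norm2D _ _) _; rewrite lerD2l.
  by apply: le_trans (normP_le _ hu _) hg.
have hd := d_formula.
have hnd : norm2 d <= ib * norm2 u0 + norm2 vN.
  rewrite {1}hd; apply: le_trans (norm2B _ _) _.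
  by rewrite norm2N norm2Z ger0_norm.
have hcJd : norm1 (c + J *m d) <= ec + eJ * norm2 d.
  have -> : c + J *m d = - (ct - c) - (Jt - J) *m d.
    rewrite mulmxBl opprB.
    have -> : Jt *m d = - ct by apply/eqP; rewrite -addr_eq0 addrC hfeas.
    by rewrite opprB opprK addrA addrAC subrK.
  apply: le_trans (norm1D _ _) _; rewrite norm1N norm1N.
  by apply: lerD.
have hgd : dotv g d = - (ib * dotv g u0) - dotv g vN.
  by rewrite {1}hd dotvBr dotvNr dotvZr.
have hgu0 : PG ^+ 2 - eJ / gamma * G ^+ 2 - eg * G <= dotv g u0.
  have -> : u0 = Pt *m g + Pt *m (gt - g) by rewrite -mulmxDr addrC subrK.
  rewrite dotvDr (dot_gPg _ hu) dotv_mulT projPT.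
  have h1 : - (norm2 (Pt *m g) * eg) <= dotv (Pt *m g) (gt - g).
    rewrite lerNl -dotvNl; apply: le_trans (CS _ _) _; rewrite norm2N.
    by apply: ler_wpM2l => //; exact: norm2_ge0.
  have h2 : norm2 (Pt *m g) * eg <= G * eg by apply: ler_wpM2r => //; exact: normP_le _ hu _.
  lra.
have hgv : - dotv g vN <= (1 - tau) * p * (C + ec) + eg * dl * (C + ec).
  set lam := invmx (Jt *m Jt^T) *m Jt *m gt.
  have e1 : dotv g vN = dotv lam ct + dotv (g - gt) vN.
    rewrite /vN dotv_mulT !dotv_mulT trmxK (WT Jt).
    rewrite /lam -dotvDl -!mulmxA -mulmxDr -mulmxDr addrC subrK //.
  rewrite e1 opprD.
  have h1 : - dotv lam ct <= (1 - tau) * p * (C + ec).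
    apply: le_trans (ler_norm _) _; rewrite normrN.
    apply: le_trans (dot_inf1 _ _) _.
    apply: le_trans (ler_wpM2r (norm1_ge0 _) hlam) _.
    by apply: ler_wpM2l; [rewrite mulr_ge0 // subr_ge0 ltW | exact: hct].
  have h2 : - dotv (g - gt) vN <= eg * dl * (C + ec).
    rewrite -dotvNl; apply: le_trans (CS _ _) _; rewrite norm2N.
    have -> : norm2 (g - gt) = norm2 (gt - g) by rewrite -norm2N opprB.
    rewrite -mulrA; apply: ler_pM => //; exact: norm2_ge0.
  lra.
have hPtg0 := norm2_ge0 (Pt *m g).
have k1 : ib * (PG ^+ 2 - eJ / gamma * G ^+ 2 - eg * G) <= ib * dotv g u0 by apply: ler_wpM2l.
have k2 : p * norm1 (c + J *m d) <= p * (ec + eJ * norm2 d) by apply: ler_wpM2l.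
have hnd2 : norm2 d <= ib * (PG + eJ / gamma * G + eg) + dl * (C + ec).
  apply: le_trans hnd _; apply: lerD => //; apply: ler_wpM2l => //; lra.
have k3 : p * (eJ * norm2 d) <= p * (eJ * (ib * (PG + eJ / gamma * G + eg) + dl * (C + ec))).
  by apply: ler_wpM2l => //; apply: ler_wpM2l.
rewrite hgd.
have e3 : eJ / gamma = gamma^-1 * eJ by rewrite mulrC.
rewrite e3 in k1 k3.
lra.
Qed.

End Main.

Theorem corollary3p2 (R : realType) (n m : nat)
  (f : 'cV[R]_n -> R) (c : 'cV[R]_n -> 'cV[R]_m)
  (g : 'cV[R]_n -> 'cV[R]_n) (J : 'cV[R]_n -> 'M[R]_(m, n))
  (ft : 'cV[R]_n -> R) (ct : 'cV[R]_n -> 'cV[R]_m)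
  (gt : 'cV[R]_n -> 'cV[R]_n) (Jt : 'cV[R]_n -> 'M[R]_(m, n))
  (eps_f eps_c eps_g eps_J gamma b_u tau theta1 : R)
  (x : nat -> 'cV[R]_n) (beta pi : nat -> R) (d : nat -> 'cV[R]_n) :
  (0 < m)%N -> (m < n)%N ->
  (* g = grad f, J = Jacobian of c (directional derivatives) *)
  (forall z v : 'cV[R]_n,
      is_derive (0 : R) (1 : R) (fun t : R => f (z + t *: v)) (dotv (g z) v)) ->
  (forall (z v : 'cV[R]_n) (i : 'I_m),
      is_derive (0 : R) (1 : R) (fun t : R => c (z + t *: v) i 0) ((J z *m v) i 0)) ->
  (* noise bounds *)
  (forall z, `|ft z - f z| <= eps_f) ->
  (forall z, norm1 (ct z - c z) <= eps_c) ->
  (forall z, norm2 (gt z - g z) <= eps_g) ->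
  (forall z, opnorm12 (Jt z - J z) <= eps_J) ->
  (* singular value bound *)
  eps_J < gamma ->
  (forall k, gamma <= sigma_min (J (x k))) ->
  (* step parameters *)
  (forall k, 0 < beta k <= b_u) ->
  (forall k, ct (x k) + Jt (x k) *m d k = 0 /\
     forall dd : 'cV[R]_n, ct (x k) + Jt (x k) *m dd = 0 ->
       2^-1 * beta k * norm2 (d k) ^+ 2 + dotv (gt (x k)) (d k)
       <= 2^-1 * beta k * norm2 dd ^+ 2 + dotv (gt (x k)) dd) ->
  0 < tau < 1 ->
  (forall k, (1 - tau)^-1 *
      norminf (invmx (Jt (x k) *m (Jt (x k))^T) *m Jt (x k) *m gt (x k)) <= pi k) ->
  let delta := (gamma - eps_J)^-1 in
  let eta := gamma^-1 in
  let psi := fun (p : R) (z : 'cV[R]_n) =>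
    b_u^-1 * norm2 (projP (J z) *m g z) ^+ 2 + p * tau * norm1 (c z) in
  let E := fun (z : 'cV[R]_n) (b p : R) =>
    b^-1 * (norm2 (g z) ^+ 2 * eta * eps_J + eps_g * norm2 (g z))
    + eps_g * delta * (norm1 (c z) + eps_c)
    + p * ((2 - tau) * eps_c
           + eps_J * (delta * (norm1 (c z) + eps_c)
                      + b^-1 * (norm2 (projP (J z) *m g z)
                                + norm2 (g z) * eta * eps_J + eps_g))) in
  let ell := fun k : nat =>
    dotv (g (x k)) (d k) + pi k * norm1 (c (x k) + J (x k) *m d k)
    - pi k * norm1 (c (x k)) in
  0 <= theta1 < 1 ->
  forall k : nat,
    E (x k) (beta k) (pi k) / (1 - theta1) <= psi (pi k) (x k) ->
    ell k <= - theta1 * ((beta k)^-1 * dotv (g (x k)) (projP (J (x k)) *m g (x k))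
                         + tau * pi k * norm1 (c (x k)))
    /\ - theta1 * ((beta k)^-1 * dotv (g (x k)) (projP (J (x k)) *m g (x k))
                   + tau * pi k * norm1 (c (x k)))
       <= - theta1 * psi (pi k) (x k).
Proof.
move=> m0 mn _ _ _ hcn hgn hJn eJg hsig hbeta hqp htau hpi delta eta psi E ell.
move=> /andP [th0 th1] k hk.
rewrite /ell /psi /E /delta /eta in hk *.
have n0 : (0 < n)%N by apply: leq_ltn_trans mn.
have e0 : 0 <= eps_J := le_trans (opnorm12_ge0 (Jt (x k) - J (x k)) n0) (hJn (x k)).
have g0 : 0 < gamma := le_lt_trans e0 eJg.
have hJ := sigma_bound (J (x k)) gamma m0 g0 (hsig k).
have hEv1 : forall v : 'cV[R]_n, norm1 ((Jt (x k) - J (x k)) *m v) <= eps_J * norm2 v.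
  move=> v; apply: le_trans (opnorm12_bound _ v) _.
  by apply: ler_wpM2r; [exact: norm2_ge0 | exact: hJn].
have hE2 : forall v : 'cV[R]_n, norm2 ((Jt (x k) - J (x k)) *m v) <= eps_J * norm2 v.
  by move=> v; apply: op_bound2; exact: hJn.
have hET := fun y => op_bound2T _ _ y e0 hE2.
have /andP [hb0 hbu] := hbeta k.
have [hfeas hopt] := hqp k.
have ms := main_step _ _ _ _ _ _ _ _ _ _ _ _ g0 e0 eJg hJ hET hb0 hfeas hopt tau (pi k) hEv1 (hcn (x k)) (hgn (x k)) htau (hpi k).
have hu := JJT_unit _ _ g0 hJ.
rewrite (dot_gPg _ hu).
set PG := norm2 (projP (J (x k)) *m g (x k)) in ms hk *.
set C := norm1 (c (x k)) in ms hk *.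
set Ee := (X in _ <= - _ + X) in ms.
set ellk := dotv (g (x k)) (d k) + _ - _ in ms *.
have t0 : 0 < 1 - theta1 by rewrite subr_gt0.
have hE : Ee <= (1 - theta1) * (b_u^-1 * PG ^+ 2 + pi k * tau * C).
  rewrite -ler_pdivrMl // mulrC.
  move: hk; rewrite /Ee.
  by [].
have hinv : b_u^-1 <= (beta k)^-1.
  by rewrite lef_pV2 ?posrE // (lt_le_trans hb0 hbu).
have hpsi : b_u^-1 * PG ^+ 2 + pi k * tau * C <= (beta k)^-1 * PG ^+ 2 + tau * pi k * C.
  rewrite [pi k * tau]mulrC lerD2r; apply: ler_wpM2r => //; exact: sqr_ge0.
have h1 := ler_wpM2l (ltW t0) hpsi.
have h2 := ler_wpM2l th0 hpsi.
split; lra.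
Qed.
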